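(* Let $X$ be an $\mathrm{OA}(N,k,2,t_1)$ and $Y$ an $\mathrm{OA}(N,k,2,t_2)$, both with symbols from $\{-1,1\}$, with strengths $t_1\ge1$ and $t_2\ge1$. Then $X$ and $Y$ are OD-equivalent if and only if the multiset of rows of $X$ equals the multiset of rows of $g(Y)$ for some $g\in G(k)^{\rm OD}$.
   Context: An $\mathrm{OA}(N,k,s,t)$ with $t\in\{0,\dots,k\}$ is an $N\times k$ array over an $s$-element symbol set such that in every $N\times t$ subarray each of the $s^t$ possible $t$-tuples appears exactly $N/s^t$ times as a row. Two $N\times k$ arrays $Y_1,Y_2$ over $\{-1,1\}$ are Hadamard equivalent if $Y_2=P_1D_1Y_1D_2P_2$ for permutation matrices $P_1,P_2$ and diagonal $\pm1$ matrices $D_1,D_2$ (i.e. obtained by signed permutations of rows and columns). $X_1,X_2$ are OD-equivalent if $[\mathbf{1},X_1]$ and $[\mathbf{1},X_2]$ are Hadamard equivalent. $G(k)^{\rm OD}$ is the group of permutations of $\{-1,1\}^k$ generated by coordinate permutations, sign changes of single coordinates, and $R_i(z_1,\dots,z_k)=(z_1z_i,\dots,z_{i-1}z_i,z_i,z_{i+1}z_i,\dots,z_kz_i)$ for $i=1,\dots,k$; it acts on arrays row by row. *)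

(* Defs.v *)
From mathcomp Require Import all_boot all_order all_algebra all_fingroup.
Set Implicit Arguments. Unset Strict Implicit. Unset Printing Implicit Defensive.
Import GRing.Theory Num.Theory.
Local Open Scope ring_scope.

Definition pm1_mx m n (A : 'M[int]_(m, n)) : bool :=
  [forall i, forall j, (A i j == 1) || (A i j == -1)].

(* OA(N,k,2,t) with symbol set {-1,1}: 0 <= t <= k, and for every choice of
   t distinct columns c and every t-tuple v over {-1,1}, v occurs as a row of
   the subarray exactly N/2^t times (stated as count * 2^t = N). *)
Definition isOA (N k t : nat) (X : 'M[int]_(N, k)) : Prop :=
  [/\ (t <= k)%N, pm1_mx X &
    forall c : 'I_t -> 'I_k, injective c ->
    forall v : 'I_t -> int, (forall j, v j = 1 \/ v j = -1) ->
      (#|[set i : 'I_N | [forall j, X i (c j) == v j]]| * 2 ^ t)%N = N].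

Definition hadamard_equiv m n (Y1 Y2 : 'M[int]_(m, n)) : Prop :=
  exists (s1 : 'S_m) (s2 : 'S_n) (d1 : 'rV[int]_m) (d2 : 'rV[int]_n),
    [/\ pm1_mx d1, pm1_mx d2 &
      Y2 = perm_mx s1 *m diag_mx d1 *m Y1 *m diag_mx d2 *m perm_mx s2].

Definition augment N k (X : 'M[int]_(N, k)) : 'M[int]_(N, 1 + k) :=
  row_mx (const_mx 1) X.

Definition OD_equiv N k (X1 X2 : 'M[int]_(N, k)) : Prop :=
  hadamard_equiv (augment X1) (augment X2).

Definition coord_perm k (s : 'S_k) (z : 'rV[int]_k) : 'rV[int]_k :=
  \row_j z 0 (s j).
Definition sign_change k (i : 'I_k) (z : 'rV[int]_k) : 'rV[int]_k :=
  \row_j (if j == i then - z 0 j else z 0 j).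
Definition R_op k (i : 'I_k) (z : 'rV[int]_k) : 'rV[int]_k :=
  \row_j (if j == i then z 0 i else z 0 j * z 0 i).

(* G(k)^OD: all finite compositions of generators.  Since each generator is a
   permutation of finite order of {-1,1}^k, this monoid equals the generated group
   (on {-1,1}^k, where it is applied). *)
Inductive GOD (k : nat) : ('rV[int]_k -> 'rV[int]_k) -> Prop :=
| GOD_id : GOD (fun z => z)
| GOD_perm (s : 'S_k) g : GOD g -> GOD (fun z => coord_perm s (g z))
| GOD_sign (i : 'I_k) g : GOD g -> GOD (fun z => sign_change i (g z))
| GOD_R (i : 'I_k) g : GOD g -> GOD (fun z => R_op i (g z)).

Definition rows N k (X : 'M[int]_(N, k)) : seq 'rV[int]_k :=
  [seq row i X | i <- enum 'I_N].

(* Main.v *)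
Require Import Defs.
From mathcomp Require Import all_boot all_order all_algebra all_fingroup.
From mathcomp Require Import ring.
Set Implicit Arguments. Unset Strict Implicit. Unset Printing Implicit Defensive.
Import GRing.Theory Num.Theory.
Local Open Scope ring_scope.

Definition pm (x : int) : bool := (x == 1) || (x == -1).
Lemma pm_sq x : pm x -> x * x = 1.
Proof. by case/orP => /eqP ->. Qed.
Lemma pmM x y : pm x -> pm y -> pm (x * y).
Proof. by case/orP => /eqP -> /orP [] /eqP ->. Qed.
Lemma pm1r : pm 1. Proof. by []. Qed.
Lemma pmN x : pm x -> pm (- x).
Proof. by case/orP => /eqP ->. Qed.
Lemma pm1P k (z : 'rV[int]_k) : pm1_mx z -> forall j, pm (z 0 j).
Proof. by move/forallP/(_ 0)/forallP. Qed.
Lemma pm1_row k (z : 'rV[int]_k) : (forall j, pm (z 0 j)) -> pm1_mx z.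
Proof. by move=> H; apply/forallP => i; apply/forallP => j; rewrite (ord1 i); apply: H. Qed.
Lemma pm1_mxP m n (A : 'M[int]_(m, n)) : pm1_mx A -> forall i j, pm (A i j).
Proof. by move=> /forallP H i; move/forallP: (H i). Qed.
Lemma pm1_rowM m n (A : 'M[int]_(m, n)) i : pm1_mx A -> pm1_mx (row i A).
Proof. by move=> H; apply: pm1_row => j; rewrite mxE; apply: pm1_mxP. Qed.

Definition augv k (z : 'rV[int]_k) : 'rV[int]_(1 + k) := row_mx (const_mx 1) z.
Lemma augv0 k (z : 'rV[int]_k) : augv z 0 ord0 = 1.
Proof. rewrite /augv. have -> : (ord0 : 'I_k.+1) = lshift k (ord0 : 'I_1) by apply: val_inj.
by rewrite row_mxEl mxE. Qed.
Lemma augvS k (z : 'rV[int]_k) b : augv z 0 (lift ord0 b) = z 0 b.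
Proof. rewrite /augv. have -> : (lift ord0 b : 'I_k.+1) = rshift 1 b by apply: val_inj.
by rewrite row_mxEr. Qed.
Lemma augment_row N k (X : 'M[int]_(N,k)) i j : augment X i j = augv (row i X) 0 j.
Proof. have -> : augment X i j = row i (augment X) 0 j by rewrite [RHS]mxE.
by rewrite /augment row_row_mx row_const. Qed.
Lemma augv_pm k (z : 'rV[int]_k) : pm1_mx z -> forall j, pm (augv z 0 j).
Proof. move=> H j; case: (unliftP ord0 j) => [b|] ->; by rewrite ?augv0 ?augvS ?(pm1P H). Qed.

Lemma had_entry m n (s1 : 'S_m) (s2 : 'S_n) d1 d2 (A : 'M[int]_(m, n)) i j :
  (perm_mx s1 *m diag_mx d1 *m A *m diag_mx d2 *m perm_mx s2) i j =
  d1 0 (s1 i) * A (s1 i) ((s2^-1)%g j) * d2 0 ((s2^-1)%g j).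
Proof.
have -> : perm_mx s2 = perm_mx ((s2^-1)^-1)%g :> 'M[int]_n by rewrite invgK.
rewrite -col_permE mxE mul_mx_diag mxE.
by rewrite -mulmxA -row_permE mxE mul_diag_mx mxE.
Qed.

Lemma had_to m n (A B : 'M[int]_(m, n)) : hadamard_equiv A B ->
  exists (s1 : 'S_m) (s2 : 'S_n) (d1 : 'I_m -> int) (d2 : 'I_n -> int),
    [/\ forall i, pm (d1 i), forall j, pm (d2 j) &
        forall i j, A i j = d1 i * B (s1 i) (s2 j) * d2 j].
Proof.
case=> s1 [s2] [d1] [d2] [h1 h2 ->].
exists s1^-1%g, s2, (fun i => d1 0 i), (fun j => d2 0 j); split.
- exact: pm1P h1.
- exact: pm1P h2.
move=> i j; rewrite had_entry permKV permK.
have e1 := pm_sq (pm1P h1 i); have e2 := pm_sq (pm1P h2 j).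
transitivity ((d1 0 i * d1 0 i) * A i j * (d2 0 j * d2 0 j)); first by rewrite e1 e2 mul1r mulr1.
ring.
Qed.

Lemma had_of m n (A B : 'M[int]_(m, n)) (t1 : 'S_m) (t2 : 'S_n) (e1 : 'I_m -> int) (e2 : 'I_n -> int) :
  (forall i, pm (e1 i)) -> (forall j, pm (e2 j)) ->
  (forall i j, A i j = e1 i * B (t1 i) (t2 j) * e2 j) -> hadamard_equiv A B.
Proof.
move=> h1 h2 H.
exists t1^-1%g, t2, (\row_i e1 i), (\row_j e2 j); split.
- by apply: pm1_row => j; rewrite mxE.
- by apply: pm1_row => j; rewrite mxE.
apply/matrixP => i j; rewrite had_entry !mxE H !permKV.
have E1 := pm_sq (h1 (t1^-1%g i)); have E2 := pm_sq (h2 (t2^-1%g j)).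
transitivity ((e1 (t1^-1%g i) * e1 (t1^-1%g i)) * B i j * (e2 (t2^-1%g j) * e2 (t2^-1%g j))); first by rewrite E1 E2 mul1r mulr1.
ring.
Qed.

Lemma rows_permP N k (X Y : 'M[int]_(N, k)) (g : 'rV[int]_k -> 'rV[int]_k) :
  perm_eq (rows X) (map g (rows Y)) <-> exists s : 'S_N, forall i, row i X = g (row (s i) Y).
Proof.
set t := [tuple g (row i Y) | i < N].
have Ht : map g (rows Y) = t.
  by rewrite /= /rows -map_comp.
rewrite Ht; split.
- case/tuple_permP => p Hp; exists p => i.
  have := Hp; rewrite /= /rows => /eq_in_map/(_ i (mem_enum _ i)) /=.
  by rewrite tnth_mktuple.
- case=> s Hs; apply/tuple_permP; exists s.
  rewrite /= /rows; apply/eq_in_map => i _ /=.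
  by rewrite tnth_mktuple.
Qed.

Lemma gen_perm k (s : 'S_k) (z : 'rV[int]_k) j :
  augv (coord_perm s z) 0 j = augv z 0 (lift_perm ord0 ord0 s j).
Proof.
case: (unliftP ord0 j) => [b|] ->.
  by rewrite lift_perm_lift !augvS mxE.
by rewrite lift_perm_id !augv0.
Qed.

Lemma gen_sign k (i : 'I_k) (z : 'rV[int]_k) j :
  augv (sign_change i z) 0 j = augv z 0 j * (if j == lift ord0 i then -1 else 1).
Proof.
case: (unliftP ord0 j) => [b|] ->.
  rewrite !augvS mxE (inj_eq (@lift_inj _ ord0)).
  by case: eqP => _; rewrite ?mulrN1 ?mulr1.
rewrite !augv0; case: eqP => [E|_]; last by rewrite mulr1.
by have := neq_lift (ord0 : 'I_k.+1) i; rewrite -E eqxx.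
Qed.

Lemma gen_R k (i : 'I_k) (z : 'rV[int]_k) j : pm1_mx z ->
  augv (R_op i z) 0 j = z 0 i * augv z 0 (tperm ord0 (lift ord0 i) j).
Proof.
move=> hz; case: (unliftP ord0 j) => [b|] ->.
  rewrite augvS mxE; case: (eqVneq b i) => [->|ne].
    by rewrite tpermR augv0 mulr1.
  by rewrite tpermD ?augvS 1?mulrC // (inj_eq (@lift_inj _ ord0)) eq_sym.
by rewrite tpermL augv0 augvS pm_sq // (pm1P hz).
Qed.

Definition HadRow k (g : 'rV[int]_k -> 'rV[int]_k) : Prop :=
  exists (sg : 'S_(1 + k)) (e : 'I_(1 + k) -> int) (c : 'rV[int]_k -> int),
    (forall j, pm (e j)) /\
    forall z, pm1_mx z -> [/\ pm1_mx (g z), pm (c z) &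
      forall j, augv (g z) 0 j = c z * augv z 0 (sg j) * e j].

Lemma HadRow_comp k (h g : 'rV[int]_k -> 'rV[int]_k) :
  HadRow h -> HadRow g -> HadRow (fun z => h (g z)).
Proof.
case=> [t [e' [c' [he' Hh]]]] [s [e [c [he Hg]]]].
exists (t * s)%g, (fun j => e (t j) * e' j), (fun z => c' (g z) * c z); split.
  by move=> j; apply: pmM.
move=> z hz; have [gz cz Ez] := Hg z hz; have [hgz cgz Egz] := Hh _ gz.
split => //; first by apply: pmM.
move=> j; rewrite Egz Ez permM; ring.
Qed.

Lemma HadRow_id k : HadRow (fun z : 'rV[int]_k => z).
Proof.
exists 1%g, (fun _ => 1), (fun _ => 1); split => // z hz; split => // j.
by rewrite perm1 mul1r mulr1.
Qed.

Lemma HadRow_perm k (s : 'S_k) : HadRow (coord_perm s).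
Proof.
exists (lift_perm ord0 ord0 s), (fun _ => 1), (fun _ => 1); split => // z hz; split => //.
  by apply: pm1_row => j; rewrite mxE (pm1P hz).
by move=> j; rewrite gen_perm mul1r mulr1.
Qed.

Lemma HadRow_sign k (i : 'I_k) : HadRow (sign_change i).
Proof.
exists 1%g, (fun j => if j == lift ord0 i then -1 else 1), (fun _ => 1); split.
  by move=> j; case: eqP.
move=> z hz; split => //.
  by apply: pm1_row => j; rewrite mxE; case: eqP => _; [apply: pmN|]; apply: (pm1P hz).
by move=> j; rewrite gen_sign perm1 mul1r.
Qed.

Lemma HadRow_R k (i : 'I_k) : HadRow (R_op i).
Proof.
exists (tperm ord0 (lift ord0 i)), (fun _ => 1), (fun z => z 0 i); split => // z hz; split.
- by apply: pm1_row => j; rewrite mxE; case: eqP => _; [|apply: pmM]; apply: (pm1P hz).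
- exact: pm1P.
- by move=> j; rewrite gen_R // mulr1.
Qed.

Lemma GOD_Had k g : @GOD k g -> HadRow g.
Proof.
elim=> [|s g' _ IH|i g' _ IH|i g' _ IH].
- exact: HadRow_id.
- exact: (HadRow_comp (HadRow_perm s) IH).
- exact: (HadRow_comp (HadRow_sign i) IH).
- exact: (HadRow_comp (HadRow_R i) IH).
Qed.

Lemma GOD_signs k (l : seq 'I_k) g : GOD g -> GOD (fun z => foldr (@sign_change k) (g z) l).
Proof.
move=> Hg; elim: l => [|a l IH] //=.
exact: (GOD_sign a IH).
Qed.

Lemma foldr_signE k (l : seq 'I_k) (w : 'rV[int]_k) b : uniq l ->
  (foldr (@sign_change k) w l) 0 b = if b \in l then - w 0 b else w 0 b.
Proof.
elim: l => [|a l IH] //= /andP [al ul].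
rewrite mxE IH // in_cons; case: (eqVneq b a) => [->|//].
by rewrite (negbTE al).
Qed.

Definition hfun k (c0 : 'I_k.+1) (z : 'rV[int]_k) : 'rV[int]_k :=
  if unlift ord0 c0 is Some a then R_op a z else z.
Definition rhoP k (c0 : 'I_k.+1) : 'S_k.+1 :=
  if unlift ord0 c0 is Some a then tperm ord0 (lift ord0 a) else 1%g.

Lemma GOD_h k (c0 : 'I_k.+1) g : GOD g -> GOD (fun z => hfun c0 (g z)).
Proof. rewrite /hfun; case: (unlift ord0 c0) => [a|] Hg //; exact: GOD_R. Qed.

Lemma h_prop k (c0 : 'I_k.+1) (z : 'rV[int]_k) : pm1_mx z ->
  rhoP c0 c0 = ord0 /\
  forall j, augv z 0 j * augv z 0 c0 = augv (hfun c0 z) 0 (rhoP c0 j).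
Proof.
move=> hz; rewrite /hfun /rhoP; case: (unliftP ord0 c0) => [a|] ->; split.
- by rewrite tpermR.
- by move=> j; rewrite gen_R // tpermK augvS mulrC.
- exact: perm1.
- by move=> j; rewrite augv0 mulr1 (perm1 j).
Qed.

Lemma perm_fix0 k (p : 'S_k.+1) : p ord0 = ord0 ->
  exists q : 'S_k, forall b, p (lift ord0 b) = lift ord0 (q b).
Proof.
move=> p0.
have Hs b : exists c, p (lift ord0 b) = lift ord0 c.
  case: (unliftP ord0 (p (lift ord0 b))) => [c ->|E]; first by exists c.
  by move: (neq_lift (ord0 : 'I_k.+1) b); rewrite -(@perm_inj _ p ord0 (lift ord0 b)) ?eqxx // p0 E.
pose f b := odflt b (unlift ord0 (p (lift ord0 b))).
have Hf b : p (lift ord0 b) = lift ord0 (f b).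
  by rewrite /f; case: (Hs b) => c ->; rewrite liftK.
have fi : injective f.
  by move=> b1 b2 E; apply: (@lift_inj _ ord0); apply: (@perm_inj _ p); rewrite !Hf E.
by exists (perm fi) => b; rewrite permE.
Qed.

Lemma pm_if (e w : int) : pm e -> (if e == -1 then - w else w) = e * w.
Proof. by case/orP => /eqP ->; rewrite ?mulN1r ?mul1r. Qed.

Theorem lemma5 (N k t1 t2 : nat) (X Y : 'M[int]_(N, k)) :
  (1 <= t1)%N -> (1 <= t2)%N -> isOA t1 X -> isOA t2 Y ->
  (OD_equiv X Y <->
   exists g : 'rV[int]_k -> 'rV[int]_k,
     GOD g /\ perm_eq (rows X) (map g (rows Y))).
Proof.
move=> _ _ [_ pX _] [_ pY _]; split.
- move/had_to => [s1 [s2 [d1 [d2 [h1 h2 H]]]]].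
  pose c0 : 'I_k.+1 := s2 ord0.
  have p1 : pm1_mx (const_mx 1 : 'rV[int]_k) by apply: pm1_row => j; rewrite mxE.
  have [rc0 _] := h_prop c0 p1.
  pose p := (s2 * rhoP c0)%g.
  have p0 : p ord0 = ord0 by rewrite permM.
  have [q Hq] := perm_fix0 p0.
  pose eps b := d2 ord0 * d2 (lift ord0 b).
  pose l := [seq b <- enum 'I_k | eps b == -1].
  exists (fun z => foldr (@sign_change k) (coord_perm q (hfun c0 z)) l); split.
    apply: GOD_signs; apply: (GOD_perm q); exact: (GOD_h c0 (GOD_id k)).
  apply/rows_permP; exists s1 => i; apply/rowP => b.
  rewrite mxE foldr_signE; last by rewrite /l filter_uniq // enum_uniq.
  rewrite /l mem_filter mem_enum andbT mxE.
  have pz := pm1_rowM (s1 i) pY.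
  have [_ hp] := h_prop c0 pz.
  have := hp (s2 (lift ord0 b)).
  rewrite -permM -/p Hq augvS => <-.
  rewrite pm_if; last by apply: pmM.
  have -> : X i b = augment X i (lift ord0 b) by rewrite augment_row augvS mxE.
  have E0 := H i ord0; rewrite (augment_row X) (augment_row Y) augv0 in E0.
  rewrite H (augment_row Y).
  have hA := augv_pm (pm1_rowM (s1 i) pY).
  move: E0 (pm_sq (hA (s2 (lift ord0 b)))) (pm_sq (hA c0)) (pm_sq (h2 ord0)) (pm_sq (h2 (lift ord0 b))).
  rewrite /eps -/c0.
  move: (augv (row (s1 i) Y) 0 (s2 (lift ord0 b))) (augv (row (s1 i) Y) 0 c0) (d1 i) (d2 ord0) (d2 (lift ord0 b)).
  move=> A C D E F e0 eA eC eE eF.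
  have -> : D = C * E.
    have : D * (C * C) * (E * E) = (D * C * E) * (C * E) by ring.
    by rewrite eC eE !mulr1 -e0 mul1r.
  ring.
- case=> g [Hg /rows_permP [s Hs]].
  have [sg [e [c [he Hc]]]] := GOD_Had Hg.
  apply: (@had_of _ _ _ _ s sg (fun i => c (row (s i) Y)) e).
  + by move=> i; have [] := Hc _ (pm1_rowM (s i) pY).
  + exact: he.
  + move=> i j; rewrite (augment_row X) (augment_row Y) Hs; have [_ _ ->] := Hc _ (pm1_rowM (s i) pY); done.
Qed.
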